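(* Interpret programs in the Boolean semiring. For every program $C$ and all $P,Q\subseteq\Sigma$, the following are equivalent: (i) $\vDash\{\mathbf 1P\}\ C\ \{\Diamond Q\}$; (ii) $P\subseteq\langle C\rangle Q$; (iii) the Lisbon triple for $P$, $C$, $Q$ is valid.
   Context: Boolean semiring: $U=\{0,1\}$ with $+=\vee$, $\cdot=\wedge$, $\mathbf 0=0$, $\mathbf 1=1$. Weighting functions $\mathcal W(X)$ are maps $m:X\to\{0,1\}$ with countable support $\mathrm{supp}(m)=\{x:m(x)=1\}$, mass $|m|=\bigvee_{x\in\mathrm{supp}(m)}m(x)$, pointwise operations; $\eta(x)$ is the indicator of $\{x\}$ and $f^\dagger(m)(y)=\bigvee_{x\in\mathrm{supp}(m)}m(x)\wedge f(x)(y)$. Fix states $\Sigma$, atomic actions $\mathsf{Act}$ with $[\![a]\!]_{\mathsf{Act}}:\Sigma\to\mathcal W(\Sigma)$, primitive tests $\mathsf{Test}\subseteq 2^\Sigma$. Programs $C::=\mathsf{skip}\mid C_1;C_2\mid C_1+C_2\mid\mathsf{assume}\ e\mid C^{\langle e,e'\rangle}\mid a$, $e::=b\mid u$ ($u\in\{0,1\}$), tests $b$ Boolean combinations of $\mathsf{true},\mathsf{false}$ and primitive tests $t$ (with $[\![t]\!](\sigma)=1$ iff $\sigma\in t$), $[\![u]\!](\sigma)=u$. Semantics: $[\![\mathsf{skip}]\!](\sigma)=\eta(\sigma)$; $[\![C_1;C_2]\!](\sigma)=[\![C_2]\!]^\dagger([\![C_1]\!](\sigma))$; $[\![C_1+C_2]\!](\sigma)=[\![C_1]\!](\sigma)+[\![C_2]\!](\sigma)$;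 $[\![a]\!]=[\![a]\!]_{\mathsf{Act}}$; $[\![\mathsf{assume}\ e]\!](\sigma)=[\![e]\!](\sigma)\cdot\eta(\sigma)$; $[\![C^{\langle e,e'\rangle}]\!]$ is the least fixed point (pointwise order) of $\Phi(f)(\sigma)=[\![e]\!](\sigma)\cdot f^\dagger([\![C]\!](\sigma))+[\![e']\!](\sigma)\cdot\eta(\sigma)$. Assertions are subsets of $\mathcal W(\Sigma)$; $\vDash\{\varphi\}C\{\psi\}$ iff $[\![C]\!]^\dagger(m)\in\psi$ for all $m\in\varphi$. For $P\subseteq\Sigma$: $\mathbf 1P=\{m:|m|=\mathbf 1,\ \mathrm{supp}(m)\subseteq P\}$ and $\Diamond Q=\{m:\mathrm{supp}(m)\cap Q\ne\emptyset\}$. $\langle C\rangle Q=\{\sigma\in\Sigma:\mathrm{supp}([\![C]\!](\sigma))\cap Q\neq\emptyset\}$. The Lisbon triple for $P,C,Q$ is valid iff for every $\sigma\in P$ there exists $\tau\in\mathrm{supp}([\![C]\!](\sigma))$ with $\tau\in Q$. *)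

(* Defs.v *)
From mathcomp Require Import all_boot.
From mathcomp Require Import boolp classical_sets cardinality.
Set Implicit Arguments. Unset Strict Implicit. Unset Printing Implicit Defensive.
Local Open Scope classical_set_scope.

Section Lang.
Variables (Sigma Act Tst : Type).

(* Boolean semiring {0,1} with + = || , . = && ; weights are maps Sigma -> bool *)
Definition supp (m : Sigma -> bool) : set Sigma := [set x | m x].
Definition is_weighting (m : Sigma -> bool) : Prop := countable (supp m).
Definition mass (m : Sigma -> bool) : bool := `[< exists x, m x >].
Definition eta (s : Sigma) : Sigma -> bool := fun t => `[< t = s >].
Definition bind (f : Sigma -> Sigma -> bool) (m : Sigma -> bool) : Sigma -> bool :=
  fun y => `[< exists x, m x && f x y >].

Inductive test :=
  | TTrue | TFalse | TPrim of Tst | TNot of test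
  | TAnd of test & test | TOr of test & test.

Inductive expr := EBool of test | EConst of bool.

Inductive prog :=
  | Skip
  | Seq of prog & prog
  | Plus of prog & prog
  | Assume of expr
  | Iter of prog & expr & expr
  | Atom of Act.

Variables (testI : Tst -> set Sigma) (actI : Act -> Sigma -> Sigma -> bool).

Fixpoint evalT (b : test) (s : Sigma) : bool :=
  match b with
  | TTrue => true
  | TFalse => false
  | TPrim t => `[< testI t s >]
  | TNot b => ~~ evalT b s
  | TAnd b1 b2 => evalT b1 s && evalT b2 s
  | TOr b1 b2 => evalT b1 s || evalT b2 s
  end.

Definition evalE (e : expr) (s : Sigma) : bool :=
  match e with EBool b => evalT b s | EConst u => u end.

Definition Phi (g : Sigma -> Sigma -> bool) (e e' : expr)
    (f : Sigma -> Sigma -> bool) : Sigma -> Sigma -> bool :=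
  fun s t => (evalE e s && bind f (g s) t) || (evalE e' s && eta s t).

(* least fixed point in the pointwise order (Knaster--Tarski: meet of all
   prefixed points) *)
Definition lfp (F : (Sigma -> Sigma -> bool) -> (Sigma -> Sigma -> bool))
  : Sigma -> Sigma -> bool :=
  fun s t => `[< forall f : Sigma -> Sigma -> bool,
                   (forall s' t', F f s' t' -> f s' t') -> f s t >].

Fixpoint den (C : prog) : Sigma -> Sigma -> bool :=
  match C with
  | Skip => eta
  | Seq C1 C2 => fun s => bind (den C2) (den C1 s)
  | Plus C1 C2 => fun s t => den C1 s t || den C2 s t
  | Assume e => fun s t => evalE e s && eta s t
  | Iter C e e' => lfp (Phi (den C) e e')
  | Atom a => actI a
  end.

Definition OneP (P : set Sigma) : set (Sigma -> bool) :=
  [set m | is_weighting m /\ mass m = true /\ supp m `<=` P].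
Definition Dia (Q : set Sigma) : set (Sigma -> bool) :=
  [set m | is_weighting m /\ supp m `&` Q !=set0].

Definition valid (phi : set (Sigma -> bool)) (C : prog) (psi : set (Sigma -> bool)) :=
  forall m, phi m -> psi (bind (den C) m).

Definition dia_pre (C : prog) (Q : set Sigma) : set Sigma :=
  [set s | supp (den C s) `&` Q !=set0].

Definition lisbon (P : set Sigma) (C : prog) (Q : set Sigma) : Prop :=
  forall s, P s -> exists t, supp (den C s) t /\ Q t.

End Lang.

(* Main.v *)
Require Import Defs.
From mathcomp Require Import all_boot.
From mathcomp Require Import boolp classical_sets cardinality.
Local Open Scope classical_set_scope.

Section H.
Variable Sigma : Type.

Lemma csub {A B : set Sigma} : A `<=` B -> countable B -> countable A.
Proof. by move=> AB; apply: sub_countable; apply: subset_card_le. Qed.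

Lemma cU (A B : set Sigma) : countable A -> countable B -> countable (A `|` B).
Proof.
move=> cA cB.
apply: (csub (B := \bigcup_(b in [set: bool]) (if b then A else B))).
  by move=> x [xA|xB]; [exists true|exists false].
apply: bigcup_countable; first exact: countableP.
by move=> [] _.
Qed.

Variable g : Sigma -> Sigma -> bool.
Hypothesis gw : forall s, countable (supp (g s)).

Fixpoint reach (n : nat) (s : Sigma) : set Sigma :=
  match n with
  | 0 => [set s]
  | n.+1 => \bigcup_(x in reach n s) supp (g x)
  end.

Definition S s := \bigcup_(n in [set: nat]) reach n s.

Lemma reach_c n s : countable (reach n s).
Proof.
elim: n => [|n IH] /=; first exact: countable1.
by apply: bigcup_countable => // x _; apply: gw.
Qed.

Lemma S_c s : countable (S s).
Proof.
apply: bigcup_countable; first exact: countableP.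
by move=> n _; apply: reach_c.
Qed.

Lemma reach_step s x n : g s x -> reach n x `<=` reach n.+1 s.
Proof.
move=> gsx; elim: n => [|n IH] /=.
  by move=> t ->; exists s.
by move=> t [y /IH ry gyt]; exists y.
Qed.

Lemma S_step s x t : g s x -> S x t -> S s t.
Proof. move=> gsx [n _ r]; exists n.+1 => //; exact: (reach_step s x n gsx t r). Qed.

End H.
Arguments csub {Sigma A B}.
Arguments S {Sigma}.
Arguments S_step {Sigma g s x t}.

Lemma den_w (Sigma Act Tst : Type)
  (testI : Tst -> set Sigma) (actI : Act -> Sigma -> Sigma -> bool)
  (actI_weighting : forall a s, is_weighting (actI a s))
  (C : prog Act Tst) : forall s, countable (supp (den testI actI C s)).
Proof.
elim: C => [|C1 IH1 C2 IH2|C1 IH1 C2 IH2|e|C IH e e'|a] s /=.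
- apply: (csub (B := [set s])); last exact: countable1.
  by move=> t /asboolP.
- apply: (csub (B := \bigcup_(x in supp (den testI actI C1 s)) supp (den testI actI C2 x))).
    by move=> t /asboolP [x /andP [h1 h2]]; exists x.
  by apply: bigcup_countable => // x _.
- apply: (csub (B := supp (den testI actI C1 s) `|` supp (den testI actI C2 s))).
    by move=> t /orP [h|h]; [left|right].
  exact: cU.
- apply: (csub (B := [set s])); last exact: countable1.
  by move=> t /andP [_ /asboolP].
- apply: (csub (B := S (den testI actI C) s)); last exact: S_c.
  move=> t /asboolP H; apply/asboolP.
  apply: (H (fun a b => `[< S (den testI actI C) a b >])) => s' t' /orP [/andP [_ /asboolP [x /andP [h1 /asboolP h2]]]|/andP [_ /asboolP ->]].
    by apply/asboolP; exact: (S_step h1 h2).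
  by apply/asboolP; exists 0.
- exact: actI_weighting.
Qed.

Theorem theorem5p2 (Sigma Act Tst : Type)
  (testI : Tst -> set Sigma) (actI : Act -> Sigma -> Sigma -> bool)
  (actI_weighting : forall a s, is_weighting (actI a s))
  (C : prog Act Tst) (P Q : set Sigma) :
  (valid testI actI (OneP P) C (Dia Q) <-> P `<=` dia_pre testI actI C Q) /\
  (P `<=` dia_pre testI actI C Q <-> lisbon testI actI P C Q).
Proof.
have dw := @den_w Sigma Act Tst testI actI actI_weighting C.
split; split.
- move=> V s Ps.
  have: OneP P (eta s).
    split; first by apply: (csub (B := [set s])); [move=> t /asboolP|exact: countable1].
    split; first by apply/asboolP; exists s; apply/asboolP.
    by move=> t /asboolP ->.
  move=> /V [_ [t [bt Qt]]]; exists t; split => //.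
  move: bt => /asboolP [x /andP [/asboolP -> h]]; exact: h.
- move=> H m [mw [mm mP]]; split.
    apply: (csub (B := \bigcup_(x in supp m) supp (den testI actI C x))).
      by move=> t /asboolP [x /andP [h1 h2]]; exists x.
    by apply: bigcup_countable => // x _.
  move: mm => /asboolP [x mx].
  have [t [h Qt]] := H x (mP x mx).
  exists t; split => //; apply/asboolP; by exists x; apply/andP; split.
- move=> H s Ps; have [t [h Qt]] := H s Ps; by exists t.
- move=> H s Ps; have [t [h Qt]] := H s Ps; by exists t.
Qed.
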